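(* Let $F$ be an almost-bipartite graph. Every graph in $\mathcal{M}_F$ is either an empty (edgeless) graph, or a non-empty graph with fewer than $|F|$ vertices. In particular, up to isomorphism there are only finitely many non-empty graphs in $\mathcal{M}_F$.
   Context: All graphs are finite and simple. A graph $F$ is almost-bipartite if it can be made bipartite by removing at most one edge. For such $F$, $\mathcal{A}_F$ is the family of subgraphs of $F$ induced by $V(F)\setminus I$, where $I$ ranges over all maximal independent sets of $F$; $\mathcal{M}_F$ is the family of all graphs (possibly with isolated vertices) that contain no subgraph isomorphic to any member of $\mathcal{A}_F$. $|F|$ is the number of vertices of $F$. *)

(* Defs.v *)
From mathcomp Require Import all_boot.
Set Implicit Arguments. Unset Strict Implicit. Unset Printing Implicit Defensive.

Definition simple_graph (T : finType) (e : rel T) : Prop :=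
  symmetric e /\ irreflexive e.

Definition edgeless (T : finType) (e : rel T) : Prop :=
  forall x y, ~~ e x y.

(* Bipartite after deleting at most one edge: there is a 2-colouring c and a
   pair {u,v} such that every monochromatic edge is the edge uv. *)
Definition almost_bipartite (T : finType) (e : rel T) : Prop :=
  exists (c : T -> bool) (u v : T),
    forall x y, e x y -> c x = c y -> (x = u /\ y = v) \/ (x = v /\ y = u).

Definition independent (T : finType) (e : rel T) (I : {set T}) : Prop :=
  forall x y, x \in I -> y \in I -> ~~ e x y.

Definition maximal_independent (T : finType) (e : rel T) (I : {set T}) : Prop :=
  independent e I /\
  forall J : {set T}, independent e J -> I \subset J -> J = I.

(* G = (TG, eG) contains a subgraph isomorphic to the induced subgraph of
   (TF, eF) on S, i.e. there is an injective edge-preserving map from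
   F[S] into G. *)
Definition contains_induced_copy (TF : finType) (eF : rel TF) (S : {set TF})
    (TG : finType) (eG : rel TG) : Prop :=
  exists f : {x : TF | x \in S} -> TG,
    injective f /\
    forall x y : {x : TF | x \in S}, eF (val x) (val y) -> eG (f x) (f y).

(* G belongs to M_F: G contains no subgraph isomorphic to F[V(F) \ I]
   for any maximal independent set I of F. *)
Definition in_M (TF : finType) (eF : rel TF) (TG : finType) (eG : rel TG) : Prop :=
  forall I : {set TF}, maximal_independent eF I ->
    ~ contains_induced_copy eF (~: I) eG.

(* Main.v *)
Require Import Defs.
From mathcomp Require Import all_boot.

Definition sw {T : eqType} (p q : T) (z : T) : T :=
  if z == p then q else if z == q then p else z.

Lemma sw_inj {T : eqType} (p q : T) : injective (sw p q).
Proof.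
move=> x y; rewrite /sw.
by do 4?case: eqP => ?; move=> *; subst; try congruence.
Qed.

Lemma swL {T : eqType} (p q : T) : sw p q p = q.
Proof. by rewrite /sw eqxx. Qed.

Lemma swN {T : eqType} (p q z : T) : z != p -> z != q -> sw p q z = z.
Proof. by rewrite /sw => /negbTE -> /negbTE ->. Qed.

Theorem lemma4p1 (TF : finType) (eF : rel TF)
    (hF : simple_graph eF) (habF : almost_bipartite eF)
    (TG : finType) (eG : rel TG) (hG : simple_graph eG)
    (hM : in_M eF eG) :
  edgeless eG \/ (~ edgeless eG /\ #|TG| < #|TF|).
Proof.
case: hF => symF irrF; case: hG => symG irrG.
case: habF => c [u [v huv]].
have [ex|nex] := boolP [exists a, exists b, eG a b]; last first.
  left => x y; apply/negP => exy; move/negP: nex; apply.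
  by apply/existsP; exists x; apply/existsP; exists y.
right; split.
  move=> el; move/existsP: ex => [a /existsP [b hab]].
  by move: (el a b); rewrite hab.
rewrite ltnNge; apply/negP => hle.
move/existsP: ex => [a /existsP [b hab]].
have ab : a != b by apply/eqP => E; rewrite E irrG in hab.
pose P := fun I : {set TF} => [forall x in I, forall y in I, ~~ eF x y].
pose S := [set x | c x != c u].
have PS : P S.
  apply/forallP => x; apply/implyP; rewrite inE => cx.
  apply/forallP => y; apply/implyP; rewrite inE => cy.
  apply/negP => exy.
  have cxy : c x = c y by move: cx cy; case: (c x); case: (c y); case: (c u).
  case: (huv x y exy cxy) => [[E _]|[_ E]]; subst.
    by rewrite eqxx in cx.
  by rewrite eqxx in cy.
have [I mI SI] := maxset_exists PS.
move/maxsetP: mI => [PI mI].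
have indep : forall J, independent eF J <-> P J.
  move=> J; split.
    move=> iJ; apply/forallP => x; apply/implyP => xJ.
    by apply/forallP => y; apply/implyP => yJ; apply: iJ.
  move=> /forallP pJ x y xJ yJ.
  by move: (pJ x); rewrite xJ /= => /forallP /(_ y); rewrite yJ.
have mxI : maximal_independent eF I.
  split; first by apply/indep.
  by move=> J /indep; apply: mI.
apply: (hM I mxI).
pose g := fun x : TF => @enum_val TG predT (widen_ord hle (enum_rank x)).
have ginj : injective g.
  move=> x y /enum_val_inj /(congr1 val) /= /val_inj; exact: enum_rank_inj.
pose f1 := sw (g u) a.
pose f := fun x => sw (f1 (g v)) b (f1 (g x)).
have finj : injective f.
  by move=> x y /sw_inj /sw_inj /ginj.
exists (fun x => f (val x)); split.
  by move=> x y /finj /val_inj.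
move=> [x xI] [y yI] /= exy.
have cu : forall z, z \in ~: I -> c z = c u.
  move=> z; rewrite inE => zI; apply/eqP/negPn/negP => czu.
  by move/subsetP: SI => /(_ z); rewrite inE czu => /(_ isT); apply/negP.
have cxy : c x = c y by rewrite (cu x xI) (cu y yI).
have uv : u != v.
  apply/eqP => E; subst v.
  by case: (huv x y exy cxy) => [[? ?]|[? ?]]; subst; rewrite irrF in exy.
have gab : f1 (g v) != a.
  rewrite -(swL (g u) a) /f1; apply/eqP => /sw_inj /ginj E.
  by rewrite E eqxx in uv.
have fu : f u = a.
  by rewrite /f /f1 swL swN // eq_sym.
have fv : f v = b by rewrite /f swL.
case: (huv x y exy cxy) => [[-> ->]|[-> ->]]; rewrite fu fv //.
by rewrite symG.
Qed.
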